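(* Let $\lambda$ be a dominant integral weight of $\mathfrak{sl}_{r+1}$ and $b\in\mathcal B(\lambda+\rho)$. For $1\le j\le i\le r$, the entry $a_{i,j}$ of the BZL path $\psi_{\mathbf i}(b)$ is boxed by rule (B-I) if and only if the corresponding entry $\mathbf a_{i-j+1,i}$ of $\mathbf a(b)$ is boxed by rule (B-II).
   Context: Fix $r\ge1$ and $\mathfrak g=\mathfrak{sl}_{r+1}$ with index set $I=\{1,\dots,r\}$, fundamental weights $\omega_1,\dots,\omega_r$, $N=r(r+1)/2$, and $\rho=\sum_i\omega_i$. For a dominant integral weight $\mu=\sum_i m_i\omega_i$, $\mathcal B(\mu)$ is identified (Kashiwara–Nakashima) with the set of semistandard Young tableaux with entries in $\{1,\dots,r+1\}$ of the shape having $m_i$ columns of height $i$; an entry equal to $k$ is a $k$-box. A tableau is identified with the tensor product of its entries read column by column from right to left, each column top to bottom, and $\tilde e_i,\tilde f_i$ act by the signature rule: for each factor write $-$ if it equals $i+1$, $+$ if it equals $i$; repeatedly cancel adjacent $+-$ pairs; $\tilde e_i$ changes the factor of the rightmost remaining $-$ from $i+1$ to $i$ (giving $0$ if none), $\tilde f_i$ changes the factor of the leftmost remaining $+$ from $i$ to $i+1$ (giving $0$ if none). For dominant $\lambda$, $\lambda+\rho$ is viewed as the partition with row lengths $\ell_1>\ell_2>\cdots>\ell_r>\ell_{r+1}=0$, and $\theta_i=\ell_i-\ell_{i+1}$ for $1\le i\le r$. Fix the long word $\mathbf i=(i_1,\dots,i_N)=(1,2,1,3,2,1,\dots,r,\dots,2,1)$.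 The BZL path $\psi_{\mathbf i}(b)=(a_1,\dots,a_N)$: $a_k$ is maximal with $\tilde e_{i_k}^{a_k}\cdots\tilde e_{i_1}^{a_1}b\ne0$. Triangular form: $a_{i,j}=a_{i(i-1)/2+j}$ for $1\le j\le i\le r$. Rule (B-I): box $a_k$ if $\tilde f_{i_k}\tilde e_{i_{k-1}}^{a_{k-1}}\cdots\tilde e_{i_1}^{a_1}b=0$. For $b\in\mathcal B(\lambda+\rho)$ and $1\le i\le j\le r$: $\mathbf a_{i,j}$ is the number of $(j+1)$-boxes in rows $1$ through $i$ of $b$; $\mathbf b_{i,j}$ is the number of boxes in the $i$th row of $b$ with entry $\ge j+1$, with convention $\mathbf b_{i,j}=0$ if $i=r+1$ or $j=r+1$. Rule (B-II): box $\mathbf a_{i,j}$ if $\mathbf b_{i,j}\ge\theta_i+\mathbf b_{i+1,j+1}$. *)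

(* Defs.v *)
From mathcomp Require Import all_boot.
Set Implicit Arguments. Unset Strict Implicit. Unset Printing Implicit Defensive.

(* A tableau is the list of its rows (row 1 first), each row a list of entries. *)
Definition tableau := seq (seq nat).

(* Dominant weight lambda = sum_i m i * omega_i (only m 1 .. m r matter).
   ell r m i = length of row i of lambda + rho = sum_{k=i}^{r} (m k + 1). *)
Definition ell (r : nat) (m : nat -> nat) (i : nat) : nat :=
  \sum_(i <= k < r.+1) (m k).+1.

Definition theta (r : nat) (m : nat -> nat) (i : nat) : nat :=
  ell r m i - ell r m i.+1.

Definition row (t : tableau) (i : nat) : seq nat := nth [::] t i.-1.  (* 1-indexed *)

(* b \in B(lambda + rho): semistandard tableaux of shape lambda + rho
   with entries in {1, ..., r+1}. *)
Definition in_B_lambda_rho (r : nat) (m : nat -> nat) (t : tableau) : Prop :=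
  [/\ size t = r,
      forall i, 1 <= i <= r -> size (row t i) = ell r m i,
      forall i, 1 <= i <= r -> all (fun x => 1 <= x <= r.+1) (row t i),
      forall i, 1 <= i <= r -> sorted leq (row t i)
    & forall i c, 1 <= i < r -> c < size (row t i.+1) ->
        nth 0 (row t i) c < nth 0 (row t i.+1) c].

(* Positions (row index 0-based, column index 0-based) in reading order:
   columns from right to left, each column from top to bottom. *)
Definition ncols (t : tableau) : nat := foldr maxn 0 (map size t).

Definition positions (t : tableau) : seq (nat * nat) :=
  flatten [seq [seq (p, c) | p <- iota 0 (size t) & c < size (nth [::] t p)]
          | c <- rev (iota 0 (ncols t))].

Definition entry (t : tableau) (pc : nat * nat) : nat :=
  nth 0 (nth [::] t pc.1) pc.2.

Definition reading_word (t : tableau) : seq nat := map (entry t) (positions t).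

Definition update (t : tableau) (pc : nat * nat) (v : nat) : tableau :=
  set_nth [::] t pc.1 (set_nth 0 (nth [::] t pc.1) pc.2 v).

(* Signature rule for index i: a factor equal to i+1 is '-', equal to i is '+'.
   Scanning left to right, each '-' cancels the nearest preceding uncancelled '+'
   (this is the iterated cancellation of adjacent '+-' pairs).
   Returns (uncancelled '+' positions, most recent first;
            uncancelled '-' positions, most recent first). *)
Fixpoint red (i : nat) (w : seq nat) (k : nat) (pl mi : seq nat)
  : seq nat * seq nat :=
  match w with
  | [::] => (pl, mi)
  | x :: w' =>
      if x == i then red i w' k.+1 (k :: pl) mi
      else if x == i.+1 then
        match pl with
        | [::] => red i w' k.+1 pl (k :: mi)
        | _ :: pl' => red i w' k.+1 pl' mi
        end
      else red i w' k.+1 pl mi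
  end.

Definition signature (i : nat) (w : seq nat) := red i w 0 [::] [::].

(* Kashiwara operators on tableaux; None stands for 0. *)
Definition e_tab (i : nat) (t : tableau) : option tableau :=
  match (signature i (reading_word t)).2 with
  | [::] => None
  | k :: _ => Some (update t (nth (0, 0) (positions t) k) i)   (* rightmost '-' *)
  end.

Definition f_tab (i : nat) (t : tableau) : option tableau :=
  match (signature i (reading_word t)).1 with
  | [::] => None
  | pl => Some (update t (nth (0, 0) (positions t) (last 0 pl)) i.+1) (* leftmost '+' *)
  end.

Definition e_pow (i n : nat) (t : tableau) : option tableau :=
  iter n (fun ot => obind (e_tab i) ot) (Some t).

(* Sum of entries: a bound on how often e_i can be applied, since each
   application lowers one entry by 1 and entries stay >= 1. *)
Definition weight_bound (t : tableau) : nat := sumn (map sumn t).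

Definition emax (i : nat) (t : tableau) : nat :=
  \max_(a < (weight_bound t).+1 | e_pow i a t != None) (a : nat).

Definition long_word (r : nat) : seq nat :=
  flatten [seq rev (iota 1 i) | i <- iota 1 r].

(* For each k, the pair (a_k, e_{i_{k-1}}^{a_{k-1}} ... e_{i_1}^{a_1} b). *)
Fixpoint bzl_run (w : seq nat) (t : tableau) : seq (nat * tableau) :=
  match w with
  | [::] => [::]
  | i :: w' => let a := emax i t in (a, t) :: bzl_run w' (odflt t (e_pow i a t))
  end.

Definition bzl_path (r : nat) (t : tableau) : seq nat :=
  map fst (bzl_run (long_word r) t).

(* 0-based position of a_{i,j} = a_{i(i-1)/2 + j} *)
Definition tri_index (i j : nat) : nat := (i * i.-1) %/ 2 + j - 1.

(* Rule (B-I): a_k is boxed iff f_{i_k} e_{i_{k-1}}^{a_{k-1}} ... e_{i_1}^{a_1} b = 0. *)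
Definition boxed_BI (r : nat) (t : tableau) (i j : nat) : bool :=
  let k := tri_index i j in
  f_tab (nth 0 (long_word r) k) (nth (0, t) (bzl_run (long_word r) t) k).2 == None.

Definition bold_a (t : tableau) (i j : nat) : nat :=
  \sum_(1 <= p < i.+1) count (pred1 j.+1) (row t p).

Definition bold_b (r : nat) (t : tableau) (i j : nat) : nat :=
  if (i == r.+1) || (j == r.+1) then 0
  else count (fun x => j.+1 <= x) (row t i).

Definition boxed_BII (r : nat) (m : nat -> nat) (t : tableau) (i j : nat) : bool :=
  theta r m i + bold_b r t i.+1 j.+1 <= bold_b r t i j.

(* Main.v *)
Require Import Defs.
From mathcomp Require Import all_boot.
From mathcomp Require Import zify.
Set Implicit Arguments. Unset Strict Implicit. Unset Printing Implicit Defensive.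

Lemma Sn_eqF (q : nat) : (q.+1 == q) = false.
Proof. by rewrite eqn_leq ltnn. Qed.

Definition neutral (q : nat) (u : seq nat) := all (fun a => (a != q) && (a != q.+1)) u.

Lemma red_neutral q u v k pl mi : neutral q u ->
  red q (u ++ v) k pl mi = red q v (k + size u) pl mi.
Proof.
elim: u k pl mi => [|a u IH] k pl mi /=; first by rewrite addn0.
case/andP=> /andP[/negbTE -> /negbTE ->] Hu.
by rewrite IH // addSnnS.
Qed.

Lemma red_noq q u v k mi : q \notin u ->
  exists l, red q (u ++ v) k [::] mi = red q v (k + size u) [::] (l ++ mi).
Proof.
elim: u k mi => [|a u IH] k mi /=; first by exists [::]; rewrite addn0.
rewrite inE negb_or => /andP[Ha Hu].
rewrite (_ : (a == q) = false); last by apply/negbTE; rewrite eq_sym.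
case: ifP => _.
  have [l ->] := IH k.+1 (k :: mi) Hu.
  by exists (l ++ [:: k]); rewrite -catA addSnnS.
have [l ->] := IH k.+1 mi Hu.
by exists l; rewrite addSnnS.
Qed.

Lemma red_noq1 q u v k pl mi : q.+1 \notin u ->
  exists pl', red q (u ++ v) k pl mi = red q v (k + size u) pl' mi.
Proof.
elim: u k pl => [|a u IH] k pl /=; first by exists pl; rewrite addn0.
rewrite inE negb_or => /andP[Ha Hu].
rewrite (_ : (a == q.+1) = false); last by apply/negbTE; rewrite eq_sym.
case: ifP => _.
  have [pl' ->] := IH k.+1 (k :: pl) Hu.
  by exists pl'; rewrite addSnnS.
have [pl' ->] := IH k.+1 pl Hu.
by exists pl'; rewrite addSnnS.
Qed.

Lemma red_split q x1 x2 v k mi : q \notin x1 -> q \notin x2 -> q.+1 \notin x2 ->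
  exists l, red q ((x1 ++ q.+1 :: x2) ++ v) k [::] mi =
            red q v (k + size x1 + (size x2).+1) [::] ((k + size x1) :: l ++ mi).
Proof.
move=> H1 H2 H3.
rewrite -catA.
have [l ->] := red_noq (q.+1 :: x2 ++ v) k mi H1.
exists l => /=.
rewrite Sn_eqF eqxx.
rewrite red_neutral; first by congr red; lia.
apply/allP=> a Ha; apply/andP; split; apply/negP=> /eqP E; subst a.
  by rewrite Ha in H2.
by rewrite Ha in H3.
Qed.

Definition block q (u : seq nat) :=
  exists u1 u3 (b : bool), [/\ u = u1 ++ q :: (if b then q.+1 :: u3 else u3),
                              neutral q u1 & neutral q u3].

Lemma neutral_notin q u : neutral q u -> (q \notin u) && (q.+1 \notin u).
Proof.
move/allP=> H; apply/andP; split; apply/negP=> Hin; have:= H _ Hin;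
  by rewrite eqxx ?andbF.
Qed.

Lemma red_block q u v k pl mi : block q u ->
  exists pl', red q (u ++ v) k pl mi = red q v (k + size u) pl' mi /\
     size pl' = size pl + (q.+1 \notin u).
Proof.
case=> u1 [u3] [b] [-> H1 H3].
rewrite -catA red_neutral //=.
rewrite ?eqxx.
have/andP[Hq3 Hq13] := neutral_notin H3.
have/andP[Hq1 Hq11] := neutral_notin H1.
case: b => /=.
  rewrite ?Sn_eqF ?eqxx red_neutral //.
  exists pl; split; first by congr red; rewrite size_cat /=; lia.
  by rewrite mem_cat !inE ?eqxx ?orbT /= addn0.
rewrite red_neutral //.
exists ((k + size u1) :: pl); split; first by congr red; rewrite size_cat /=; lia.
by rewrite mem_cat !inE Sn_eqF /= (negbTE Hq11) (negbTE Hq13) /= addn1.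
Qed.

Lemma red_blocks q cols v k pl mi : (forall u, u \in cols -> block q u) ->
  exists pl', red q (flatten cols ++ v) k pl mi = red q v (k + size (flatten cols)) pl' mi /\
     size pl' = size pl + count (fun u => q.+1 \notin u) cols.
Proof.
elim: cols k pl => [|u cols IH] k pl /=.
  by move=> _; exists pl; rewrite !addn0.
move=> Hall.
have Hb : block q u by apply: Hall; rewrite inE eqxx.
have Hc : forall u', u' \in cols -> block q u' by move=> u' Hu'; apply: Hall; rewrite inE Hu' orbT.
rewrite -catA.
have [pl1 [-> Hs1]] := red_block (flatten cols ++ v) k pl mi Hb.
have [pl2 [-> Hs2]] := IH (k + size u) pl1 Hc.
exists pl2; split; first by rewrite size_cat addnA.
by rewrite Hs2 Hs1 addnA.
Qed.

Lemma entry_update T pc v pc' :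
  entry (update T pc v) pc' = if pc' == pc then v else entry T pc'.
Proof.
case: pc => p c; case: pc' => p' c'; rewrite /entry /update /=.
rewrite nth_set_nth /= xpair_eqE.
case: (p' == p) /eqP => [->|] /=; last by [].
by rewrite nth_set_nth /=.
Qed.

Definition posF (s : seq nat) : seq (nat * nat) :=
  flatten [seq [seq (p, c) | p <- iota 0 (size s) & c < nth 0 s p]
          | c <- rev (iota 0 (foldr maxn 0 s))].

Lemma positionsE T : positions T = posF (map size T).
Proof.
rewrite /positions /posF /ncols size_map.
congr flatten; apply: eq_map => c; congr map.
apply: eq_in_filter => p; rewrite mem_iota /= => Hp.
by rewrite (nth_map [::]).
Qed.

Lemma foldr_maxn_ub (s : seq nat) x : x \in s -> x <= foldr maxn 0 s.
Proof.
elim: s => [|a s IH] //=; rewrite inE => /orP[/eqP->|/IH H].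
  exact: leq_maxl.
exact: leq_trans H (leq_maxr _ _).
Qed.

Lemma mem_positions T p c :
  ((p, c) \in positions T) = (p < size T) && (c < size (nth [::] T p)).
Proof.
apply/idP/idP.
  move/flatten_mapP=> [c' _] /mapP [p' ]; rewrite mem_filter mem_iota /=.
  by case/andP=> Hc Hp [-> ->]; rewrite Hc -(add0n (size T)) Hp.
case/andP=> Hp Hc; apply/flatten_mapP; exists c.
  rewrite mem_rev mem_iota /=; apply: leq_trans Hc _.
  apply: foldr_maxn_ub; apply/mapP; exists (nth [::] T p) => //.
  exact: mem_nth.
by apply/mapP; exists p => //; rewrite mem_filter mem_iota /= Hc.
Qed.

Lemma uniq_flatten_col (F : nat -> seq (nat * nat)) (s : seq nat) :
  uniq s -> (forall c, uniq (F c)) -> (forall c pc, pc \in F c -> pc.2 = c) ->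
  uniq (flatten [seq F c | c <- s]).
Proof.
move=> + HU HF; elim: s => [|c s IH] //= /andP[Hc Hs].
rewrite cat_uniq HU IH // andbT.
apply/hasPn => pc /flatten_mapP [c' Hc' Hpc]; apply/negP => Hpc2.
have E1 := HF _ _ Hpc; have E2 := HF _ _ Hpc2.
by move: Hc; rewrite -E2 E1 Hc'.
Qed.

Lemma uniq_positions T : uniq (positions T).
Proof.
rewrite /positions; apply: uniq_flatten_col.
- by rewrite rev_uniq iota_uniq.
- move=> c; rewrite map_inj_uniq ?filter_uniq ?iota_uniq //.
  by move=> a b [].
- by move=> c pc /mapP [p _ ->].
Qed.

Lemma shape_update T pc v : pc \in positions T ->
  map size (update T pc v) = map size T.
Proof.
case: pc => p c; rewrite mem_positions => /andP[Hp Hc].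
rewrite /update /=.
apply: (@eq_from_nth _ 0); rewrite !size_map size_set_nth; first by lia.
move=> n; rewrite (_ : maxn p.+1 (size T) = size T); last by lia.
move=> Hn; rewrite (nth_map [::]); last by rewrite size_set_nth; lia.
rewrite (nth_map [::]) // nth_set_nth /=.
by case: eqP => [->|] //=; rewrite size_set_nth; lia.
Qed.

Lemma positions_update T pc v : pc \in positions T ->
  positions (update T pc v) = positions T.
Proof. by move=> H; rewrite !positionsE shape_update. Qed.

Lemma set_nth_cat (s1 s2 : seq nat) a b :
  set_nth 0 (s1 ++ a :: s2) (size s1) b = s1 ++ b :: s2.
Proof. by elim: s1 => [|x s1 IH] //=; rewrite IH. Qed.

Lemma reading_word_update T k v : k < size (positions T) ->
  reading_word (update T (nth (0,0) (positions T) k) v) =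
  set_nth 0 (reading_word T) k v.
Proof.
move=> Hk.
have Hin : nth (0,0) (positions T) k \in positions T by exact: mem_nth.
rewrite /reading_word positions_update //.
apply: (@eq_from_nth _ 0) => [|n Hn]; first by rewrite size_set_nth !size_map; lia.
rewrite size_map in Hn.
rewrite (nth_map (0,0)) // nth_set_nth /= entry_update.
rewrite nth_uniq ?uniq_positions //.
case: eqP => // _.
by rewrite (nth_map (0,0)).
Qed.

Lemma word_determines T1 T2 : map size T1 = map size T2 ->
  reading_word T1 = reading_word T2 -> T1 = T2.
Proof.
move=> Hs Hw.
have HP : positions T1 = positions T2 by rewrite !positionsE Hs.
move: Hw; rewrite /reading_word HP => /eq_in_map He.
have Hsz : size T1 = size T2 by rewrite -(size_map size T1) Hs size_map.
apply: (@eq_from_nth _ [::]) => // p Hp.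
have Hr : size (nth [::] T1 p) = size (nth [::] T2 p).
  by rewrite -!(nth_map [::] 0 size) -?Hsz // Hs.
apply: (@eq_from_nth _ 0) => // c Hc.
have := He (p, c); rewrite /entry /= => -> //.
by rewrite mem_positions -Hsz Hp -Hr Hc.
Qed.

Lemma size_reading_word T : size (reading_word T) = size (positions T).
Proof. by rewrite size_map. Qed.

Definition lowerq (q v : nat) := if v == q.+1 then q else v.

Definition Zprop q z := forall k pl mi, (red q z k pl mi).2 = mi.

Lemma last_occ (s : seq nat) v : v \in s ->
  exists s1 s2, s = s1 ++ v :: s2 /\ v \notin s2.
Proof.
elim: s => [|a s IH] //; rewrite inE.
case Hv: (v \in s).
  move=> _; have [s1 [s2 [-> H]]] := IH Hv.
  by exists (a :: s1), s2.
rewrite orbF => /eqP Ev; subst v; exists [::], s; by rewrite Hv.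
Qed.

Lemma map_lowerq_id q s : q.+1 \notin s -> map (lowerq q) s = s.
Proof.
elim: s => [|a s IH] //=; rewrite inE negb_or => /andP[Ha Hs].
by rewrite IH // /lowerq eq_sym (negbTE Ha).
Qed.

Lemma lowerq_notin q s : q.+1 \notin map (lowerq q) s.
Proof.
apply/mapP=> [[a _]]; rewrite /lowerq; case: eqP => [_|Ha] E.
  by move: (Sn_eqF q); rewrite E eqxx.
by apply: Ha.
Qed.

Lemma count_pred1_notin (s : seq nat) v : (count (pred1 v) s == 0) = (v \notin s).
Proof. by rewrite -has_pred1 has_count; case: (count _ _). Qed.

Lemma e_iter q T x z : reading_word T = x ++ z -> q \notin x -> Zprop q z ->
  forall a, a <= count (pred1 q.+1) x ->
  exists T', [/\ e_pow q a T = Some T', map size T' = map size T &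
    exists x1 x2, [/\ x = x1 ++ x2, reading_word T' = x1 ++ map (lowerq q) x2 ++ z &
                    count (pred1 q.+1) x1 = count (pred1 q.+1) x - a]].
Proof.
move=> Hw Hx Hz; elim=> [|a IH] Ha.
  exists T; split => //; exists x, [::]; split => //; first by rewrite cats0.
  by rewrite subn0.
have [T' [He Hs [x1 [x2 [Ex Hw' Hc]]]]] := IH (ltnW Ha).
have Hin : q.+1 \in x1.
  have : count (pred1 q.+1) x1 != 0 by rewrite Hc; lia.
  by rewrite count_pred1_notin negbK.
have [y1 [y2 [Ey Hy2]]] := last_occ Hin.
have Hx1 : q \notin x1 by apply: contra Hx; rewrite Ex mem_cat => ->.
have Hy1 : q \notin y1 by apply: contra Hx1; rewrite Ey mem_cat => ->.
have Hy2q : q \notin y2 by apply: contra Hx1; rewrite Ey mem_cat !inE => ->; rewrite !orbT.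
have Hsig : exists l, (signature q (reading_word T')).2 = size y1 :: l.
  rewrite /signature Hw' Ey.
  have [l ->] := red_split (map (lowerq q) x2 ++ z) 0 [::] Hy1 Hy2q Hy2.
  have [pl' ->] := red_noq1 z (0 + size y1 + (size y2).+1) [::] ((0 + size y1) :: l ++ [::]) (lowerq_notin q x2).
  by rewrite Hz; exists (l ++ [::]).
have [l Hl] := Hsig.
have Hk : size y1 < size (positions T').
  by rewrite -size_reading_word Hw' Ey !size_cat /=; lia.
exists (update T' (nth (0,0) (positions T') (size y1)) q); split.
- by rewrite /e_pow iterS -/(e_pow q a T) He /= /e_tab Hl.
- by rewrite shape_update ?Hs //; exact: mem_nth.
- exists y1, (q.+1 :: y2 ++ x2); split.
  + by rewrite Ex Ey -catA.
  + rewrite reading_word_update // Hw' Ey -catA /= set_nth_cat /=.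
    have -> : lowerq q q.+1 = q by rewrite /lowerq eqxx.
    by rewrite map_cat (map_lowerq_id Hy2) -catA.
  + move: Hc; rewrite Ey count_cat /=.
    have -> : count (pred1 q.+1) y2 = 0 by apply/eqP; rewrite count_pred1_notin.
    rewrite eqxx /=. lia.
Qed.

Lemma e_pow_None q n T : e_pow q n T = None -> forall n', n <= n' -> e_pow q n' T = None.
Proof.
move=> H n'; elim: n' => [|n' IH]; first by rewrite leqn0 => /eqP <-.
rewrite leq_eqVlt => /orP[/eqP <- //|Hlt].
by rewrite /e_pow iterS -/(e_pow q n' T) IH.
Qed.

Lemma e_full q T x z : reading_word T = x ++ z -> q \notin x -> Zprop q z ->
  let M := count (pred1 q.+1) x in
  exists T', [/\ e_pow q M T = Some T', e_pow q M.+1 T = None,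
     map size T' = map size T & reading_word T' = map (lowerq q) x ++ z].
Proof.
move=> Hw Hx Hz M.
have [T' [He Hs [x1 [x2 [Ex Hw' Hc]]]]] := e_iter Hw Hx Hz (leqnn M).
rewrite subnn in Hc.
have Hx1 : q.+1 \notin x1 by rewrite -count_pred1_notin Hc.
have Hx1q : q \notin x1 by apply: contra Hx; rewrite Ex mem_cat => ->.
exists T'; split => //.
- rewrite /e_pow iterS -/(e_pow q M T) He /= /e_tab /signature Hw'.
  rewrite red_neutral; last first.
    by apply/allP=> v Hv; apply/andP; split; apply/negP=> /eqP E; subst v;
       [rewrite Hv in Hx1q | rewrite Hv in Hx1].
  have [pl' ->] := red_noq1 z (0 + size x1) [::] [::] (lowerq_notin q x2).
  by rewrite Hz.
- by rewrite Hw' Ex map_cat (map_lowerq_id Hx1) catA.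
Qed.

Lemma emax_eq q T M T' : e_pow q M T = Some T' -> e_pow q M.+1 T = None ->
  M <= weight_bound T -> emax q T = M.
Proof.
move=> H1 H2 Hb; rewrite /emax; apply/eqP; rewrite eqn_leq; apply/andP; split.
  apply/bigmax_leqP => a Ha; rewrite leqNgt; apply/negP => Hlt.
  by move: Ha; rewrite (e_pow_None H2 Hlt).
have Hlt : M < (weight_bound T).+1 by [].
by apply: (bigmax_sup (Ordinal Hlt)) => //=; rewrite H1.
Qed.

Definition cells (T : tableau) : seq (nat * nat) :=
  flatten [seq [seq (p, c) | c <- iota 0 (size (nth [::] T p))] | p <- iota 0 (size T)].

Lemma size_le_sumn (s : seq nat) : all (fun x => 0 < x) s -> size s <= sumn s.
Proof. by elim: s => [|a s IH] //= /andP[Ha Hs]; have := IH Hs; lia. Qed.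

Lemma positions_le_weight T : (forall row, row \in T -> all (fun x => 0 < x) row) ->
  size (positions T) <= weight_bound T.
Proof.
move=> Hpos.
have H1 : size (positions T) <= size (cells T).
  apply: uniq_leq_size; first exact: uniq_positions.
  case=> p c; rewrite mem_positions => /andP[Hp Hc].
  apply/flatten_mapP; exists p; first by rewrite mem_iota.
  by apply/mapP; exists c; rewrite ?mem_iota.
apply: leq_trans H1 _.
rewrite /cells size_flatten /shape -map_comp.
rewrite (eq_map (g := fun p => size (nth [::] T p))); last by move=> p /=; rewrite size_map size_iota.
rewrite (map_comp size (nth [::] T)) map_nth_iota0 // take_size /weight_bound.
elim: T Hpos => [|row T IH] //= Hpos.
apply: leq_add.
  by apply: size_le_sumn; apply: Hpos; rewrite inE eqxx.
by apply: IH => r0 Hr; apply: Hpos; rewrite inE Hr orbT.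
Qed.

Lemma count_sorted (s : seq nat) a c : sorted leq s ->
  (c < count (fun x => x <= a) s) = (c < size s) && (nth 0 s c <= a).
Proof.
elim: s c => [|x s IH] c //=.
move=> Hp.
have Hs : sorted leq s by move: Hp; rewrite path_sortedE; [case/andP| exact: leq_trans].
have Hall : all (leq x) s by apply: order_path_min Hp; exact: leq_trans.
case: (leqP x a) => Hxa /=.
  case: c => [|c] //=; by rewrite add1n !ltnS IH.
have H0 : count (fun x0 => x0 <= a) s = 0.
  apply/eqP; rewrite -leqn0 leqNgt -has_count; apply/hasPn => y Hy.
  have := allP Hall y Hy; lia.
rewrite H0 add0n; case: c => [|c] //=; first by rewrite [x <= a]leqNgt Hxa.
rewrite ltnS; case Hc: (c < size s) => //=.
have H := allP Hall _ (mem_nth 0 Hc); apply/esym/negbTE; rewrite -ltnNge; exact: leq_trans Hxa H.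
Qed.

Lemma ell_S r m k : k <= r -> ell r m k = (m k).+1 + ell r m k.+1.
Proof. by move=> Hk; rewrite /ell big_ltn. Qed.

Lemma ell_over r m : ell r m r.+1 = 0.
Proof. by rewrite /ell big_geq. Qed.

Definition gv (i q p x : nat) := if x <= i then p else if x == i.+1 then maxn p q.+1 else x.

Section Tab.
Variables (r : nat) (m : nat -> nat) (t : tableau).
Hypothesis HB : in_B_lambda_rho r m t.

Definition X p c := nth 0 (nth [::] t p) c.
Definition rw p := nth [::] t p.

Lemma Hsz : size t = r. Proof. by case: HB. Qed.

Lemma Hrow p : p < r -> size (rw p) = ell r m p.+1.
Proof. by case: HB => _ H _ _ _ Hp; have := H p.+1; rewrite /row /=; apply; lia. Qed.

Lemma Hrange p c : p < r -> c < size (rw p) -> 1 <= X p c <= r.+1.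
Proof.
case: HB => _ _ H _ _ Hp Hc; have := H p.+1; rewrite /row /= => H'.
have := H' (ltac:(lia)); move/allP; apply; exact: mem_nth.
Qed.

Lemma Hsorted p : p < r -> sorted leq (rw p).
Proof. by case: HB => _ _ _ H _ Hp; have := H p.+1; rewrite /row /=; apply; lia. Qed.

Lemma Hcol p c : p.+1 < r -> c < size (rw p.+1) -> X p c < X p.+1 c.
Proof. by case: HB => _ _ _ _ H Hp Hc; have := H p.+1 c; rewrite /row /=; apply => //; lia. Qed.

Lemma ell_mono a b : a <= b -> b <= r.+1 -> ell r m b <= ell r m a.
Proof.
move=> Hab Hb; rewrite /ell (@big_cat_nat _ _ _ b a r.+1) //=.
exact: leq_addl.
Qed.

Lemma size_decr p p' : p <= p' -> p' < r -> size (rw p') <= size (rw p).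
Proof.
move=> Hpp' Hp'; rewrite !Hrow; try lia.
apply: ell_mono; lia.
Qed.

Lemma L2 p p' c : p < p' -> p' < r -> c < size (rw p') -> X p c < X p' c.
Proof.
elim: p' => [|p' IH] //= Hpp' Hp' Hc.
have Hc' : c < size (rw p') by apply: leq_trans Hc (size_decr _ _); lia.
have := Hcol Hp' Hc.
case: (ltngtP p p') => H; [|lia|].
  by have := IH H (ltac:(lia)) Hc'; lia.
by subst.
Qed.

Lemma L1 p c : p < r -> c < size (rw p) -> p < X p c.
Proof.
elim: p => [|p IH] Hp Hc.
  by have := Hrange Hp Hc; lia.
have Hc' : c < size (rw p) by apply: leq_trans Hc (size_decr _ _); lia.
have H1 := IH (ltac:(lia)) Hc'.
have H2 := Hcol Hp Hc.
exact: leq_ltn_trans H1 H2.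
Qed.

End Tab.

Definition colw (T : tableau) c :=
  [seq entry T (p, c) | p <- iota 0 (size T) & c < size (nth [::] T p)].

Lemma reading_cols T :
  reading_word T = flatten [seq colw T c | c <- rev (iota 0 (ncols T))].
Proof.
rewrite /reading_word /positions map_flatten; congr flatten.
by rewrite -map_comp; apply: eq_map => c /=; rewrite /colw -map_comp.
Qed.

Section Tab2.
Variables (r : nat) (m : nat -> nat) (t : tableau).
Hypothesis HB : in_B_lambda_rho r m t.

Definition St i q := mkseq (fun p => map (gv i q p.+1) (nth [::] t p)) (size t).

Lemma nth_St i q p : nth [::] (St i q) p = map (gv i q p.+1) (nth [::] t p).
Proof.
case: (ltnP p (size t)) => Hp; first by rewrite nth_mkseq.
by rewrite !nth_default // size_mkseq.
Qed.

Lemma shape_St i q : map size (St i q) = map size t.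
Proof.
apply: (@eq_from_nth _ 0); rewrite !size_map ?size_mkseq ?size_iota // => p Hp.
by rewrite !(nth_map [::]) ?size_mkseq // nth_St size_map.
Qed.

Lemma size_St i q : size (St i q) = size t.
Proof. by rewrite size_mkseq. Qed.

Lemma ncols_St i q : ncols (St i q) = ncols t.
Proof. by rewrite /ncols shape_St. Qed.

Definition cw i q c := [seq gv i q p.+1 (X t p c) | p <- iota 0 r & c < size (rw t p)].

Lemma colw_St i q c : colw (St i q) c = cw i q c.
Proof.
rewrite /colw /cw size_St (Hsz HB).
rewrite (@eq_filter _ _ (fun p => c < size (rw t p))); last first.
  by move=> p; rewrite nth_St size_map.
apply/eq_in_map => p; rewrite mem_filter => /andP[Hc Hp].
by rewrite /entry /= nth_St (nth_map 0).
Qed.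

Lemma word_St i q : reading_word (St i q) =
  flatten [seq cw i q c | c <- rev (iota 0 (ncols t))].
Proof.
rewrite reading_cols ncols_St; congr flatten; apply: eq_map => c.
exact: colw_St.
Qed.

End Tab2.

Section Cols.
Variables (r : nat) (m : nat -> nat) (t : tableau).
Hypothesis HB : in_B_lambda_rho r m t.
Variables (i q : nat).
Hypothesis Hq1 : 1 <= q.
Hypothesis Hqi : q <= i.
Hypothesis Hir : i <= r.

Definition nq := count (fun x => x <= i) (rw t q.-1).
Definition LL := count (fun x => x <= i.+1) (rw t q).

Lemma cnt_q c : c < size (rw t q.-1) -> X t q.-1 c <= i -> c < nq.
Proof.
move=> H1 H2; rewrite /nq count_sorted ?H1 ?H2 //.
apply: (Hsorted HB); lia.
Qed.

Lemma cnt_q' c : c < nq -> (c < size (rw t q.-1)) && (X t q.-1 c <= i).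
Proof. by rewrite /nq count_sorted //; apply: (Hsorted HB); lia. Qed.

Lemma cntL c : c < LL -> [/\ q < r, c < size (rw t q) & X t q c <= i.+1].
Proof.
case: (ltnP q r) => Hqr.
  by rewrite /LL count_sorted; [case/andP | apply: (Hsorted HB)].
by rewrite /LL /rw nth_default // (Hsz HB).
Qed.

Lemma cntL' c : q < r -> c < size (rw t q) -> X t q c <= i.+1 -> c < LL.
Proof. by move=> Hqr H1 H2; rewrite /LL count_sorted ?H1 ?H2 //; apply: (Hsorted HB). Qed.

Lemma factA p c : p < r -> c < size (rw t p) -> nq <= c -> p = q.-1 -> i < X t p c.
Proof.
move=> Hp Hc Hn Ep; subst p; rewrite ltnNge; apply/negP => H.
by rewrite leqNgt (cnt_q Hc H) in Hn.
Qed.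

Lemma factB p c : p < r -> c < size (rw t p) -> nq <= c -> p = q -> i.+1 < X t p c.
Proof.
move=> Hp Hc Hn Ep; subst p.
have Hc' : c < size (rw t q.-1) by apply: leq_trans Hc (size_decr HB _ _); lia.
have := factA (p := q.-1) (ltac:(lia)) Hc' Hn erefl.
have := L2 HB (p := q.-1) (p' := q) (ltac:(lia)) Hp Hc.
lia.
Qed.

Lemma factC p c : p < r -> c < size (rw t p) -> c < nq -> p <= q.-1 -> X t p c <= i.
Proof.
move=> Hp Hc Hn Hpq; case/andP: (cnt_q' Hn) => Hc' Hx.
rewrite leq_eqVlt in Hpq; case/orP: Hpq => [/eqP->//|Hlt].
have := L2 HB Hlt (ltac:(lia)) Hc'; lia.
Qed.

Lemma factD p c : p < r -> c < size (rw t p) -> p < X t p c <= r.+1.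
Proof.
move=> Hp Hc; rewrite (L1 HB Hp Hc) /=.
by case/andP: (Hrange HB Hp Hc).
Qed.

Lemma colA c : nq <= c -> q \notin cw r t i q c.
Proof.
move=> Hn; apply/mapP => [[p]]; rewrite mem_filter mem_iota /= => /andP[Hc Hp].
have HA := factA Hp Hc Hn; have HD := factD Hp Hc.
rewrite /gv; case: ifP => H1; first by have := HA; lia.
case: ifP => H2; lia.
Qed.

Lemma colC_hi c : nq <= c -> cw r t i q.-1 c = map (lowerq q) (cw r t i q c).
Proof.
move=> Hn; rewrite /cw -map_comp; apply/eq_in_map => p.
rewrite mem_filter mem_iota /= => /andP[Hc Hp].
have HA := factA Hp Hc Hn; have HB' := factB Hp Hc Hn; have HD := factD Hp Hc.
rewrite /gv /lowerq /=.
case: ifP => H1; case: ifP => H2 //; try case: ifP => H3; try case: ifP => H4; lia.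
Qed.

Lemma colC_lo c : c < nq -> cw r t i q.-1 c = cw r t i q c.
Proof.
move=> Hn; rewrite /cw; apply/eq_in_map => p.
rewrite mem_filter mem_iota /= => /andP[Hc Hp].
have HC := factC Hp Hc Hn; have HD := factD Hp Hc.
rewrite /gv; case: ifP => H1 //; case: ifP => H2 //; lia.
Qed.

Lemma iota_split : iota 0 r = iota 0 q.-1 ++ q.-1 :: iota q (r - q).
Proof.
have -> : iota 0 r = iota 0 (q.-1 + (r - q).+1) by congr iota; lia.
by rewrite iotaD add0n /= prednK.
Qed.

Lemma neutral_map (f : nat -> nat) (s : seq nat) :
  (forall p, p \in s -> (f p != q) && (f p != q.+1)) -> neutral q (map f s).
Proof. by move=> H; apply/allP=> a /mapP [p Hp ->]; apply: H. Qed.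

Lemma colB c : c < nq -> exists u1 u3,
  [/\ cw r t i q c = u1 ++ q :: (if c < LL then q.+1 :: u3 else u3),
      neutral q u1 & neutral q u3].
Proof.
move=> Hn; case/andP: (cnt_q' Hn) => Hcq Hxq.
rewrite /cw iota_split filter_cat map_cat /= Hcq /=.
have -> : gv i q q.-1.+1 (X t q.-1 c) = q by rewrite prednK // /gv Hxq.
set u1 := map _ (filter _ (iota 0 q.-1)).
have Hu1 : neutral q u1.
  apply: neutral_map => p; rewrite mem_filter mem_iota /= => /andP[Hc Hp].
  have HC := factC (p := p) (ltac:(lia)) Hc Hn (ltac:(lia)).
  rewrite /gv HC; apply/andP; split; apply/negP => /eqP; lia.
case HL: (c < LL).
  have [Hqr Hcs Hx] := cntL HL.
  have -> : iota q (r - q) = q :: iota q.+1 (r - q.+1).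
    have -> : r - q = (r - q.+1).+1 by lia.
    by [].
  rewrite /= Hcs /=.
  exists u1, [seq gv i q p.+1 (X t p c) | p <- iota q.+1 (r - q.+1) & c < size (rw t p)].
  split => //.
    congr (_ ++ _ :: _ :: _); rewrite /gv; case: ifP => // H1; case: ifP => H2; lia.
  apply: neutral_map => p; rewrite mem_filter mem_iota /= => /andP[Hc Hp].
  have HD := factD (p := p) (ltac:(lia)) Hc.
  rewrite /gv; apply/andP; split; apply/negP => /eqP; case: ifP => H1; try case: ifP => H2; lia.
exists u1, [seq gv i q p.+1 (X t p c) | p <- iota q (r - q) & c < size (rw t p)].
split => //.
apply: neutral_map => p; rewrite mem_filter mem_iota /= => /andP[Hc Hp].
have HD := factD (p := p) (ltac:(lia)) Hc.
have HE : p = q -> i.+1 < X t p c.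
  move=> Ep; subst p; rewrite ltnNge; apply/negP => Hx.
  by rewrite (cntL' (ltac:(lia)) Hc Hx) in HL.
rewrite /gv; apply/andP; split; apply/negP => /eqP; case: ifP => H1; try case: ifP => H2; lia.
Qed.

End Cols.

Lemma block_mem q u1 u3 (b : bool) : neutral q u1 -> neutral q u3 ->
  (q.+1 \in u1 ++ q :: (if b then q.+1 :: u3 else u3)) = b.
Proof.
move=> H1 H3; have/andP[_ N1] := neutral_notin H1; have/andP[_ N3] := neutral_notin H3.
rewrite mem_cat (negbTE N1) /= inE Sn_eqF /=.
by case: b => /=; rewrite ?inE ?eqxx // (negbTE N3).
Qed.

Lemma count_lt_iota n L : (count (fun c => ~~ (c < L)) (iota 0 n) == 0) = (n <= L).
Proof.
apply/idP/idP.
  rewrite leqNgt; apply: contraL => HL.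
  by rewrite -lt0n -has_count; apply/hasP; exists L; rewrite ?mem_iota ?ltnn.
move=> Hn; rewrite eqn0Ngt -has_count; apply/hasPn => c.
rewrite mem_iota /= negbK => Hc; lia.
Qed.

Section Step.
Variables (r : nat) (m : nat -> nat) (t : tableau).
Hypothesis HB : in_B_lambda_rho r m t.
Variables (i q : nat).
Hypothesis Hq1 : 1 <= q.
Hypothesis Hqi : q <= i.
Hypothesis Hir : i <= r.

Let N := ncols t.
Let n := nq t i q.

Lemma nq_le : n <= N.
Proof.
apply: leq_trans (count_size _ _) _.
apply: foldr_maxn_ub; apply/mapP; exists (rw t q.-1) => //.
by apply: mem_nth; rewrite (Hsz HB); lia.
Qed.

Let xw := flatten [seq cw r t i q c | c <- rev (iota n (N - n))].
Let zw := flatten [seq cw r t i q c | c <- rev (iota 0 n)].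

Lemma split_cols : rev (iota 0 N) = rev (iota n (N - n)) ++ rev (iota 0 n).
Proof.
have := nq_le => H.
by rewrite -rev_cat -{1}(subnKC H) iotaD add0n.
Qed.

Lemma word_split : reading_word (St t i q) = xw ++ zw.
Proof. by rewrite (word_St HB) -/N split_cols map_cat flatten_cat. Qed.

Lemma xw_noq : q \notin xw.
Proof.
apply/negP => /flatten_mapP [c]; rewrite mem_rev mem_iota => /andP[Hc _].
by apply/negP; apply: (colA HB Hq1 Hqi Hir).
Qed.

Lemma zw_blocks u : u \in [seq cw r t i q c | c <- rev (iota 0 n)] -> block q u.
Proof.
case/mapP => c; rewrite mem_rev mem_iota /= => Hc ->.
have [u1 [u3 [E H1 H3]]] := colB HB Hq1 Hqi Hir Hc.
by exists u1, u3, (c < LL t i q).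
Qed.

Lemma zw_Z : Zprop q zw.
Proof.
move=> k pl mi.
have [pl' [E _]] := red_blocks [::] k pl mi zw_blocks.
by move: E; rewrite cats0 => ->.
Qed.

Lemma word_St' : reading_word (St t i q.-1) = map (lowerq q) xw ++ zw.
Proof.
rewrite (word_St HB) -/N split_cols map_cat flatten_cat map_flatten -map_comp.
congr (flatten _ ++ flatten _); apply/eq_in_map => c; rewrite mem_rev mem_iota => /andP[H1 H2].
  exact: (colC_hi HB Hq1 Hqi Hir).
exact: (colC_lo HB Hq1 Hqi Hir).
Qed.

Lemma St_pos row : row \in St t i q -> all (fun x => 0 < x) row.
Proof.
case/(nthP [::]) => [p Hp <-]; rewrite nth_St; apply/allP => a /mapP [x Hx ->].
rewrite size_St (Hsz HB) in Hp.
case/(nthP 0): Hx => [c Hc Ex].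
have := factD HB Hp Hc; rewrite /X Ex /gv => H.
case: ifP => ?; try case: ifP => ?; lia.
Qed.

Let M := count (pred1 q.+1) xw.

Lemma M_le : M <= weight_bound (St t i q).
Proof.
apply: leq_trans (positions_le_weight St_pos).
rewrite -size_reading_word word_split size_cat.
apply: leq_trans (count_size _ _) _; exact: leq_addr.
Qed.

Lemma step_e : emax q (St t i q) = M /\ odflt (St t i q) (e_pow q M (St t i q)) = St t i q.-1.
Proof.
have [T' [H1 H2 H3 H4]] := e_full word_split xw_noq zw_Z.
split; first exact: emax_eq H1 H2 M_le.
rewrite H1 /=; apply: word_determines.
  by rewrite H3 !shape_St.
by rewrite H4 word_St'.
Qed.

Lemma step_f : (f_tab q (St t i q) == None) = (n <= LL t i q).
Proof.
rewrite /f_tab /signature word_split.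
have [l ->] := red_noq zw 0 [::] xw_noq.
have [pl' [E Hs]] := red_blocks [::] (0 + size xw) [::] (l ++ [::]) zw_blocks.
move: E; rewrite cats0 => -> /=.
transitivity (size pl' == 0); first by case: pl' {Hs}.
rewrite Hs add0n count_map count_rev.
rewrite -(count_lt_iota n (LL t i q)); congr (_ == 0).
apply: eq_in_count => c; rewrite mem_iota /= => Hc.
have [u1 [u3 [E H1 H3]]] := colB HB Hq1 Hqi Hir Hc.
by rewrite /= E block_mem.
Qed.

End Step.

Fixpoint fin (w : seq nat) (t : tableau) : tableau :=
  match w with
  | [::] => t
  | i :: w' => fin w' (odflt t (e_pow i (emax i t) t))
  end.

Lemma bzl_run_cat u v t : bzl_run (u ++ v) t = bzl_run u t ++ bzl_run v (fin u t).
Proof. by elim: u t => [|a u IH] t //=; rewrite IH. Qed.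

Lemma fin_cat u v t : fin (u ++ v) t = fin v (fin u t).
Proof. by elim: u t => [|a u IH] t //=; rewrite IH. Qed.

Lemma iota1S n : iota 1 n.+1 = iota 1 n ++ [:: n.+1].
Proof. by have := iotaD 1 n 1; rewrite addn1 add1n => ->. Qed.

Lemma long_wordS n : long_word n.+1 = long_word n ++ rev (iota 1 n.+1).
Proof.
rewrite {1}/long_word {1}iota1S map_cat flatten_cat.
by congr (_ ++ _); rewrite /= cats0.
Qed.

Lemma rev_iotaS q : rev (iota 1 q.+1) = q.+1 :: rev (iota 1 q).
Proof. by rewrite iota1S rev_cat. Qed.

Section Glob.
Variables (r : nat) (m : nat -> nat) (t : tableau).
Hypothesis HB : in_B_lambda_rho r m t.

Lemma St_eq i q i' q' :
  (forall p x, p < x -> gv i q p.+1 x = gv i' q' p.+1 x) -> St t i q = St t i' q'.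
Proof.
move=> H; rewrite /St /mkseq; apply/eq_in_map => p; rewrite mem_iota /= => Hp.
apply/eq_in_map => x /(nthP 0) [c Hc Ex].
rewrite (Hsz HB) in Hp.
have := factD HB Hp Hc; rewrite /X Ex => /andP[H1 _].
exact: H.
Qed.

Lemma St00 : St t 0 0 = t.
Proof.
rewrite -{2}(mkseq_nth [::] t) /St /mkseq; apply/eq_in_map => p; rewrite mem_iota /= => Hp.
rewrite -{2}(map_id (nth [::] t p)); apply/eq_in_map => x /(nthP 0) [c Hc Ex].
rewrite (Hsz HB) in Hp.
have := factD HB Hp Hc; rewrite /X Ex /gv => H.
case: ifP => ?; try case: ifP => ?; lia.
Qed.

Lemma St_next i : St t i 0 = St t i.+1 i.+1.
Proof.
apply: St_eq => p x Hpx.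
rewrite /gv; case: ifP => ?; try case: ifP => ?; try case: ifP => ?; try case: ifP => ?; lia.
Qed.

Lemma block_run i : 1 <= i -> i <= r -> forall q, q <= i ->
  map snd (bzl_run (rev (iota 1 q)) (St t i q)) = map (St t i) (rev (iota 1 q)) /\
  fin (rev (iota 1 q)) (St t i q) = St t i 0.
Proof.
move=> Hi Hir; elim=> [|q IH] Hq //.
rewrite rev_iotaS /=.
have [He Hf] := step_e HB (q := q.+1) (ltac:(lia)) Hq Hir.
rewrite He Hf /=.
have [IH1 IH2] := IH (ltac:(lia)).
by rewrite IH1 IH2.
Qed.

Definition SL n := flatten [seq map (St t i) (rev (iota 1 i)) | i <- iota 1 n].

Lemma long_run n : n <= r ->
  map snd (bzl_run (long_word n) t) = SL n /\ fin (long_word n) t = St t n 0.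
Proof.
elim: n => [|n IH] Hn.
  by rewrite /= St00.
have [IH1 IH2] := IH (ltac:(lia)).
rewrite long_wordS bzl_run_cat fin_cat map_cat IH1 IH2 St_next.
have [B1 B2] := block_run (i := n.+1) (ltac:(lia)) Hn (leqnn _).
rewrite B1 B2; split => //.
rewrite /SL [in RHS]iota1S map_cat flatten_cat; congr (_ ++ _).
exact: (esym (cats0 _)).
Qed.

End Glob.

Lemma sumn_iota1 n : sumn (iota 1 n) = (n.+1 * n) %/ 2.
Proof.
have H : (sumn (iota 1 n)).*2 = n.+1 * n.
  elim: n => [|n IH] //.
  rewrite iota1S sumn_cat /= addn0 doubleD IH; lia.
by rewrite -H -muln2 mulnK.
Qed.

Lemma nth_tri (T : Type) (x0 : T) (F : nat -> seq T) r i j :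
  (forall k, size (F k) = k) -> 1 <= j -> j <= i -> i <= r ->
  nth x0 (flatten [seq F k | k <- iota 1 r]) (tri_index i j) = nth x0 (F i) j.-1.
Proof.
move=> HF Hj Hji Hir.
have -> : iota 1 r = iota 1 i.-1 ++ i :: iota i.+1 (r - i).
  have -> : r = i.-1 + (r - i).+1 by lia.
  rewrite iotaD /=; congr (_ ++ _ :: iota _ _); lia.
have Hs : size (flatten [seq F k | k <- iota 1 i.-1]) = (i * i.-1) %/ 2.
  rewrite size_flatten /shape -map_comp (eq_map (g := id)) // map_id sumn_iota1.
  by rewrite prednK; lia.
rewrite map_cat flatten_cat nth_cat Hs /tri_index.
set a := (i * i.-1) %/ 2.
rewrite (_ : (a + j - 1 < a) = false); last by lia.
have -> : a + j - 1 - a = j.-1 by lia.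
rewrite /= nth_cat HF (_ : j.-1 < i = true) //; lia.
Qed.

Lemma count_geC (s : seq nat) i :
  count (fun x => i.+1 <= x) s = size s - count (fun x => x <= i) s.
Proof.
rewrite -(count_predC (fun x => x <= i) s) addKn.
by apply: eq_count => x /=; rewrite ltnNge.
Qed.

Lemma nth_snd (s : seq (nat * tableau)) t k : (nth (0, t) s k).2 = nth t (map snd s) k.
Proof. by elim: s k => [|a s IH] [|k] //=. Qed.

Theorem mainTheorem4 (r : nat) (m : nat -> nat) (t : tableau) :
  1 <= r -> in_B_lambda_rho r m t ->
  forall i j : nat, 1 <= j -> j <= i -> i <= r ->
    boxed_BI r t i j = boxed_BII r m t (i - j + 1) i.
Proof.
move=> Hr HB i j Hj Hji Hir.
set q := i - j + 1.
have Hq1 : 1 <= q by rewrite /q; lia.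
have Hqi : q <= i by rewrite /q; lia.
have Hrev : nth 0 (rev (iota 1 i)) j.-1 = q.
  rewrite nth_rev ?size_iota; last by lia.
  rewrite nth_iota; last by lia.
  rewrite /q; lia.
have Hw : nth 0 (long_word r) (tri_index i j) = q.
  rewrite /long_word (nth_tri 0 (F := fun k => rev (iota 1 k))) //.
  by move=> k; rewrite size_rev size_iota.
have Hs : (nth (0, t) (bzl_run (long_word r) t) (tri_index i j)).2 = St t i q.
  rewrite nth_snd; have [-> _] := long_run HB (leqnn r).
  rewrite /SL (nth_tri t (F := fun k => map (St t k) (rev (iota 1 k)))) //.
    by rewrite (nth_map 0) ?Hrev // size_rev size_iota; lia.
  by move=> k; rewrite size_map size_rev size_iota.
rewrite /boxed_BI Hw Hs (step_f HB Hq1 Hqi Hir) /boxed_BII.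
have Hsz1 : size (rw t q.-1) = ell r m q by rewrite (Hrow HB) ?prednK //; lia.
have Hsz2 : size (rw t q) = ell r m q.+1.
  case: (ltnP q r) => Hqr; first by rewrite (Hrow HB).
  have -> : q = r by lia.
  by rewrite /rw nth_default ?(Hsz HB) // ell_over.
have Hell : ell r m q.+1 <= ell r m q by apply: ell_mono; lia.
have Hn : nq t i q <= ell r m q by rewrite -Hsz1 count_size.
have HL : LL t i q <= ell r m q.+1 by rewrite -Hsz2 count_size.
have Hb1 : bold_b r t q i = ell r m q - nq t i q.
  rewrite /bold_b (_ : (q == r.+1) || (i == r.+1) = false); last by apply/negbTE; lia.
  by rewrite /row count_geC -/(rw t q.-1) Hsz1.
have Hb2 : bold_b r t q.+1 i.+1 = ell r m q.+1 - LL t i q.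
  rewrite /bold_b; case: ifP => H.
    case/orP: H => /eqP H.
      have Hq : q = r by lia.
      by rewrite /LL /rw Hq nth_default ?(Hsz HB) // ell_over.
    have Hi : i = r by lia.
    suff : LL t i q = size (rw t q) by rewrite Hsz2; lia.
    apply/eqP; rewrite -all_count; apply/allP => x /(nthP 0) [c Hc <-].
    have Hqr : q < r.
      rewrite ltnNge; apply/negP => Hqr; move: Hc; rewrite /rw nth_default //.
      by rewrite (Hsz HB).
    have := Hrange HB Hqr Hc; by rewrite /X /rw Hi /= => /andP[_ ->].
  by rewrite /row /= count_geC -/(rw t q) Hsz2.
rewrite Hb1 Hb2 /theta.
apply/idP/idP => H; lia.
Qed.
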